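(* Let $G$ be a connected graph and let $u,v\in V(G)$. (a) Suppose $u$ and $v$ are adjacent in $G$ and let $T,T'$ be search trees on $G$. Then $u$ and $v$ have different relative order in $T$ and $T'$ if and only if every sequence of rotations transforming $T$ into $T'$ contains an odd number of $uv$-rotations. (b) If $u$ and $v$ are true twins in $G$ and $T,T'$ are search trees on $G$, then every minimum length $TT'$-path in $\mathcal{R}(G)$ has exactly one edge determined by a $uv$-rotation if $u$ and $v$ have different relative orders in $T$ and $T'$, and no edge determined by a $uv$-rotation if $u$ and $v$ have the same relative order in $T$ and $T'$.
   Context: For a connected graph $G$, a search tree on $G$ is a rooted tree with vertex set $V(G)$ defined recursively: its root is some vertex $r\in V(G)$, and the children of $r$ are the roots of search trees on the connected components of $G-r$. For a rooted tree $T$ and $w\in V(T)$, $T|w$ denotes the subtree rooted at $w$. Let $T$ be a search tree on $G$, let $b$ be a child of $a$ in $T$, and let $p$ be the parent of $a$ (if it exists). The $ab$-rotation (also called a rotation of the pair $a,b$) transforms $T$ into the search tree $T'$ in which: $a$ is a child of $b$ and $b$ is a child of $p$ (or $b$ is the root if $a$ was the root); every subtree of $a$ in $T$ other than $T|b$ is a subtree of $a$ in $T'$; and every subtree $S$ of $b$ in $T$ is a subtree of $a$ in $T'$ if $a$ is adjacent in $G$ to some vertex of $S$, and a subtree of $b$ in $T'$ otherwise. The rotation graph $\mathcal{R}(G)$ has the search trees on $G$ as vertices, two adjacent iff they differ by one rotation. If $u$ is an ancestor of $v$ in $T$ and a descendant of $v$ in $T'$ (or vice versa), $u,v$ have different relative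 order in $T$ and $T'$; if $u$ is an ancestor of $v$ in both, or a descendant of $v$ in both, they have the same relative order. True twins: vertices with equal closed neighbourhoods. *)

(* Defs.v *)
From mathcomp Require Import all_boot.
Set Implicit Arguments. Unset Strict Implicit. Unset Printing Implicit Defensive.

(* A graph G: vertex set the finType V, adjacency e (assumed symmetric,
   irreflexive in the theorem). *)

(* A rooted tree with vertex set V is encoded by its parent function
   (None at the root). *)
Definition rtree (V : finType) := {ffun V -> option V}.

Section Defs.
Variables (V : finType) (e : rel V).

Definition erel (S : {set V}) : rel V :=
  [rel x y | [&& x \in S, y \in S & e x y]].

Definition is_comp (S C : {set V}) : Prop :=
  exists2 x, x \in S & C = [set y in S | connect (erel S) x y].

(* is_search S r t : the restriction of t to S is a search tree on G[S]
   with root r (recursive definition from the paper): r \in S and the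
   children of r are the roots of search trees on the connected
   components of G[S] - r. *)
Inductive is_search : {set V} -> V -> rtree V -> Prop :=
| IsSearch (S : {set V}) (r : V) (t : rtree V) :
    r \in S ->
    (forall C, is_comp (S :\ r) C ->
       exists c, [/\ c \in C, t c = Some r & is_search C c t]) ->
    is_search S r t.

Definition search_tree (t : rtree V) : Prop :=
  exists r, t r = None /\ is_search [set: V] r t.

Definition prel (t : rtree V) : rel V := [rel x y | t x == Some y].
Definition anc (t : rtree V) (x y : V) : bool :=
  (x != y) && connect (prel t) y x.      (* x is a proper ancestor of y *)
Definition in_subtree (t : rtree V) (x y : V) : bool := connect (prel t) y x.

(* the tree obtained from t by the ab-rotation (b a child of a) *)
Definition rotate (t : rtree V) (a b : V) : rtree V :=
  [ffun x => if x == a then Some b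
             else if x == b then t a
             else if t x == Some b then
               (if [exists y, in_subtree t x y && e a y] then Some a else Some b)
             else t x].

Definition rotation (t : rtree V) (a b : V) (t' : rtree V) : Prop :=
  [/\ search_tree t, search_tree t', t b = Some a & t' = rotate t a b].

Fixpoint rot_seq (t : rtree V) (s : seq (V * V * rtree V)) (t' : rtree V) : Prop :=
  match s with
  | [::] => t = t'
  | (a, b, t1) :: s' => rotation t a b t1 /\ rot_seq t1 s' t'
  end.

Definition n_uv (u v : V) (s : seq (V * V * rtree V)) : nat :=
  count (fun p : V * V * rtree V =>
           ((p.1.1 == u) && (p.1.2 == v)) || ((p.1.1 == v) && (p.1.2 == u))) s.

Definition diff_order (t t' : rtree V) (u v : V) : Prop :=
  (anc t u v /\ anc t' v u) \/ (anc t v u /\ anc t' u v).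

Definition same_order (t t' : rtree V) (u v : V) : Prop :=
  (anc t u v /\ anc t' u v) \/ (anc t v u /\ anc t' v u).

Definition min_rot_seq (t : rtree V) (s : seq (V * V * rtree V)) (t' : rtree V) : Prop :=
  rot_seq t s t' /\ forall s', rot_seq t s' t' -> size s <= size s'.

(* true twins: equal closed neighbourhoods *)
Definition true_twins (u v : V) : Prop :=
  forall w, ((w == u) || e u w) = ((w == v) || e v w).

End Defs.

(* Main.v *)
Require Import Defs.
From mathcomp Require Import all_boot.
From mathcomp Require Import zify.
Set Implicit Arguments. Unset Strict Implicit. Unset Printing Implicit Defensive.

Section Gen.
Variable V : finType.
Implicit Types (t : rtree V).

Lemma clP (r : rel V) (P : V -> Prop) x :
  P x -> (forall y z, r y z -> P z -> P y) -> forall y, connect r y x -> P y.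
Proof.
move=> Px cl y /connectP [p]; elim: p y => [|z p IH] y /=; first by move=> _ hx; rewrite -hx.
by case/andP=> ryz pz lst; apply: cl ryz (IH z pz lst).
Qed.

Lemma clP' (r : rel V) (P : V -> Prop) x :
  P x -> (forall y z, r y z -> connect r z x -> P z -> P y) ->
  forall y, connect r y x -> P y.
Proof.
move=> Px cl y Hy.
suff: connect r y x /\ P y by case.
apply: (clP (P := fun y => connect r y x /\ P y)) Hy; first by split=> //; apply: connect0.
move=> y' z rz [cz Pz]; split; last exact: cl rz cz Pz.
exact: connect_trans (connect1 rz) cz.
Qed.

Lemma subt_refl t x : in_subtree t x x. Proof. exact: connect0. Qed.
Lemma subt_trans t x y z : in_subtree t x y -> in_subtree t y z -> in_subtree t x z.
Proof. rewrite /in_subtree => h1 h2; exact: connect_trans h2 h1. Qed.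
Lemma subt_par t y p : t y = Some p -> in_subtree t p y.
Proof. by move=> h; apply: connect1; rewrite /prel /= h. Qed.

Lemma parent_in t x y : in_subtree t x y -> y != x ->
  exists2 p, t y = Some p & in_subtree t x p.
Proof.
move: y; apply: (clP (P := fun y => y != x -> exists2 p, t y = Some p & in_subtree t x p)).
  by rewrite eqxx.
move=> y' z /= /eqP hz Pz _; exists z => //.
case: (eqVneq z x) => [->|nzx]; first exact: subt_refl.
by case: (Pz nzx) => p hp hxp; apply: subt_trans hxp (subt_par hp).
Qed.

Lemma child_of t x y : in_subtree t x y -> y != x ->
  exists2 w, t w = Some x & in_subtree t w y.
Proof.
move: y; apply: (clP (P := fun y => y != x -> exists2 w, t w = Some x & in_subtree t w y)).
  by rewrite eqxx.
move=> y' z /= /eqP hz Pz _.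
case: (eqVneq z x) => [ezx|nzx]; first by exists y'; [rewrite hz ezx | apply: subt_refl].
by case: (Pz nzx) => w hw hwz; exists w => //; apply: subt_trans hwz (subt_par hz).
Qed.

Lemma anc_total t a b y : in_subtree t a y -> in_subtree t b y ->
  in_subtree t a b || in_subtree t b a.
Proof.
move: y; apply: (clP' (P := fun y => in_subtree t b y -> in_subtree t a b || in_subtree t b a)).
  by move=> ->; rewrite orbT.
move=> y' z /= /eqP hz cz Pz hb.
case: (eqVneq y' b) => [eyb|nyb].
  by rewrite -eyb; apply/orP; left; apply: subt_trans cz (subt_par hz).
case: (parent_in hb nyb) => p; rewrite hz => -[<-]; exact: Pz.
Qed.

Lemma root_only t r x : t r = None -> in_subtree t x r -> x = r.
Proof.
move=> hr h; case: (eqVneq r x) => [//|nrx].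
by case: (parent_in h nrx) => p; rewrite hr.
Qed.

Section Rank.
Variables (t : rtree V) (r : V).
Hypotheses (Hr : t r = None) (Hreach : forall y, connect (prel t) y r).

Definition fs (o : option V) := if o is Some y then t y else None.

Lemma ex_rank y : exists n, iter n fs (Some y) == None.
Proof.
apply: (clP (P := fun y => exists n, iter n fs (Some y) == None)) (Hreach y).
  by exists 1; rewrite /= Hr.
by move=> y' z /= /eqP hz [n hn]; exists n.+1; rewrite iterSr /= hz.
Qed.

Definition rank y := ex_minn (ex_rank y).

Lemma rank_lt y z : t y = Some z -> rank z < rank y.
Proof.
move=> hz; rewrite /rank.
case: (ex_minnP (ex_rank z)) => m hm minm; case: (ex_minnP (ex_rank y)) => n hn minn.
case: n hn minn => [|n] hn minn; first by [].
by rewrite iterSr /= hz in hn; rewrite ltnS; apply: minm.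
Qed.

Lemma rank_le x y : in_subtree t x y -> rank x <= rank y.
Proof.
move: y; apply: (clP (P := fun y => rank x <= rank y)) => // y' z /= /eqP hz h.
exact: leq_trans h (ltnW (rank_lt hz)).
Qed.

Lemma anti x y : in_subtree t x y -> in_subtree t y x -> x = y.
Proof.
move=> hxy hyx; case: (eqVneq y x) => [//|nyx].
case: (parent_in hxy nyx) => p hp hxp.
have h1 := leq_ltn_trans (rank_le hxp) (rank_lt hp).
by have := leq_ltn_trans (rank_le hyx) h1; rewrite ltnn.
Qed.

Lemma no_self y : t y != Some y.
Proof. by apply/eqP => h; have := rank_lt h; rewrite ltnn. Qed.

End Rank.
End Gen.

Section Graph.
Variables (V : finType) (e : rel V).
Hypotheses (e_sym : symmetric e) (e_irr : irreflexive e).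
Implicit Types (t : rtree V).

Definition S1p t := forall w x, t w = Some x -> exists z, in_subtree t w z && e x z.
Definition S2p t := forall x y, e x y -> in_subtree t x y || in_subtree t y x.
Definition good t :=
  [/\ exists r, t r = None /\ (forall y, connect (prel t) y r), S1p t & S2p t].
Definition Dset t x := [set y | in_subtree t x y].
Lemma inD t x y : (y \in Dset t x) = in_subtree t x y.
Proof. by rewrite inE. Qed.

Lemma good_anti t : good t -> forall x y, in_subtree t x y -> in_subtree t y x -> x = y.
Proof. by case=> [[r [Hr Hre]] _ _]; apply: anti Hr Hre. Qed.

Lemma good_noself t : good t -> forall y, t y != Some y.
Proof. by case=> [[r [Hr Hre]] _ _]; apply: no_self Hr Hre. Qed.

Lemma good_S1 t : good t -> S1p t. Proof. by case. Qed.
Lemma good_S2 t : good t -> S2p t. Proof. by case. Qed.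

Lemma good_par_ne t a b : good t -> t b = Some a -> a != b.
Proof. by move=> g hb; apply/eqP => eab; have := good_noself g b; rewrite hb eab eqxx. Qed.

Lemma good_par_notin t w x : good t -> t w = Some x -> ~~ in_subtree t w x.
Proof.
move=> g hw; apply/negP => hxw; have exw := good_anti g (subt_par hw) hxw.
by have := good_noself g w; rewrite hw exw eqxx.
Qed.

Lemma good_proper t w x : good t -> t w = Some x -> Dset t w \proper Dset t x.
Proof.
move=> g hw; rewrite properE; apply/andP; split.
  by apply/subsetP => y; rewrite !(inD, inE) => h; apply: subt_trans (subt_par hw) h.
apply/subsetPn; exists x; first by rewrite inD subt_refl.
by rewrite (inD, inE); apply: good_par_notin hw.
Qed.

Lemma erel_sym (S : {set V}) : symmetric (erel e S).
Proof. by move=> a b; rewrite /erel /= e_sym andbCA. Qed.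

Lemma erel_mono (S S' : {set V}) : S \subset S' -> forall x y,
  connect (erel e S) x y -> connect (erel e S') x y.
Proof.
move=> sub; apply: connect_sub => a b /= /and3P [ha hb hab].
by apply: connect1; rewrite /erel /= (subsetP sub _ ha) (subsetP sub _ hb).
Qed.

Lemma erel_csym (S : {set V}) x y : connect (erel e S) x y = connect (erel e S) y x.
Proof. by apply: sym_connect_sym; apply: erel_sym. Qed.

Lemma conn_D t : good t -> forall x y, in_subtree t x y -> connect (erel e (Dset t x)) x y.
Proof.
move=> g x; have [n] := ubnP #|Dset t x|; elim: n => // n IH in x * => /ltnSE hn y hy.
case: (eqVneq y x) => [->|nyx]; first exact: connect0.
case: (child_of hy nyx) => w hw hwy.
have hwlt : #|Dset t w| < n by apply: leq_trans (proper_card (good_proper g hw)) hn.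
have sub : Dset t w \subset Dset t x.
  by apply/subsetP => z; rewrite !(inD, inE) => h; apply: subt_trans (subt_par hw) h.
case: (good_S1 g hw) => z /andP [hwz exz].
have c1 := erel_mono sub (IH w hwlt y hwy).
have c2 := erel_mono sub (IH w hwlt z hwz).
rewrite erel_csym in c2.
apply: connect_trans (connect_trans c2 c1).
apply: connect1; rewrite /erel /= !inD subt_refl exz /=.
by rewrite andbT; apply: subt_trans (subt_par hw) hwz.
Qed.

Lemma comp_child t c x z : good t -> t c = Some x -> in_subtree t c z ->
  Dset t c = [set y in Dset t x :\ x | connect (erel e (Dset t x :\ x)) z y].
Proof.
move=> g hc hz; apply/setP => y; rewrite !(inD, inE).
have subD : Dset t c \subset Dset t x :\ x.
  apply/subsetP => w; rewrite !(inD, inE) => hw; rewrite (subt_trans (subt_par hc) hw) andbT.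
  apply/eqP => ewx; move: hw; rewrite ewx => hxc.
  by have := good_par_notin g hc; rewrite hxc.
apply/idP/idP.
  move=> hy; have := subsetP subD y; rewrite !(inD, inE) hy => /(_ isT) /andP [-> ->] /=.
  have c1 := conn_D g hz; have c2 := conn_D g hy.
  rewrite erel_csym in c1.
  exact: erel_mono subD _ _ (connect_trans c1 c2).
case/andP=> /andP [nyx hxy] hc2; rewrite erel_csym in hc2; move: y hc2 {nyx hxy}.
apply: (clP (P := fun y => in_subtree t c y)) => // y w /= /and3P [].
rewrite !(inD, inE) => /andP [nyx hxy] /andP [nwx hxw] eyw hcw.
case/orP: (good_S2 g eyw) => [hyw|hwy].
  case/orP: (anc_total hcw hyw) => [hcy|hyc]; first by [].
  case: (eqVneq c y) => [->|ncy]; first exact: subt_refl.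
  case: (parent_in hyc ncy) => p; rewrite hc => -[<-] hyx.
  by move: nyx; rewrite (good_anti g hyx hxy) eqxx.
exact: subt_trans hcw hwy.
Qed.

Lemma good_is_search t : good t -> forall x, is_search e (Dset t x) x t.
Proof.
move=> g x; have [n] := ubnP #|Dset t x|; elim: n => // n IH in x * => /ltnSE hn.
constructor; first by rewrite (inD, inE) subt_refl.
move=> C [z]; rewrite !(inD, inE) => /andP [nzx hxz] ->.
case: (child_of hxz nzx) => c hc hcz.
exists c; rewrite -(comp_child g hc hcz); split => //.
  by rewrite (inD, inE) subt_refl.
apply: IH; exact: leq_trans (proper_card (good_proper g hc)) hn.
Qed.

Lemma good_search t : good t -> search_tree e t.
Proof.
move=> g; have := g; case=> [[r [hr hre]] _ _]; exists r; split => //.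
have -> : [set: V] = Dset t r by apply/setP => y; rewrite inE inD; symmetry; apply: hre.
exact: good_is_search.
Qed.

End Graph.

Section Search.
Variables (V : finType) (e : rel V).
Hypotheses (e_sym : symmetric e) (e_irr : irreflexive e).
Implicit Types (t : rtree V).

Lemma is_search_inv (S : {set V}) r t : is_search e S r t -> r \in S /\
  (forall C, is_comp e (S :\ r) C ->
       exists c, [/\ c \in C, t c = Some r & is_search e C c t]).
Proof. by case. Qed.

Definition SG (S : {set V}) r t := [/\ forall y, y \in S -> connect (prel t) y r,
  forall y, y \in S -> y != r -> exists2 p, t y = Some p & p \in S,
  forall w x, w \in S -> x \in S -> t w = Some x -> exists z, in_subtree t w z && e x z &
  forall x y, x \in S -> y \in S -> e x y -> in_subtree t x y || in_subtree t y x].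

Lemma comp_conn (A : {set V}) y a : y \in A ->
  a \in [set w in A | connect (erel e A) y w] ->
  connect (erel e [set w in A | connect (erel e A) y w]) y a.
Proof.
move=> hy; rewrite inE => /andP [ha hya]; rewrite (erel_csym e_sym) in hya.
rewrite (erel_csym e_sym); move: a hya {ha}.
apply: (clP' (P := fun w => connect (erel e [set w in A | connect (erel e A) y w]) w y)).
  exact: connect0.
move=> w z /= /and3P [hw hz ewz] czy Pz.
apply: connect_trans Pz; apply: connect1; rewrite /erel /= !inE hw hz ewz /=.
rewrite (erel_csym e_sym) in czy; rewrite czy /=.
by rewrite andbT; apply: connect_trans czy (connect1 _); rewrite /erel /= hz hw e_sym ewz.
Qed.

Lemma crossing (S C : {set V}) a b : connect (erel e S) a b -> a \notin C -> b \in C ->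
  exists x y, [/\ x \in S, y \in S, e x y, x \notin C & y \in C].
Proof.
move=> hab haC hbC.
suff : a \in C \/ exists x y, [/\ x \in S, y \in S, e x y, x \notin C & y \in C].
  by case=> //; rewrite (negbTE haC).
move: a hab {haC}.
apply: (clP (P := fun a => a \in C \/ exists x y, [/\ x \in S, y \in S, e x y, x \notin C & y \in C])).
  by left.
move=> w z /= /and3P [hw hz ewz] [hzC|ex]; last by right.
case hwC : (w \in C); first by left.
by right; exists w, z; rewrite hwC.
Qed.

Lemma search_good n (S : {set V}) r t : #|S| < n -> is_search e S r t ->
  (forall x y, x \in S -> y \in S -> connect (erel e S) x y) ->
  (forall p, t r = Some p -> p \notin S) -> SG S r t.
Proof.
elim: n S r => // n IH S r /ltnSE hn /is_search_inv [hr hcomp] hconn hpar.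
pose Cy y := [set w in S :\ r | connect (erel e (S :\ r)) y w].
have CyS y : Cy y \subset S :\ r by apply/subsetP => w; rewrite inE => /andP [].
have CyS' y w : w \in Cy y -> w \in S /\ w != r.
  by move/(subsetP (CyS y)); rewrite !inE => /andP [-> ->].
have selfC y : y \in S :\ r -> y \in Cy y.
  by move=> hy; rewrite /Cy !inE; move: hy; rewrite !inE => /andP [-> ->]; rewrite connect0.
have IHc : forall y, y \in S :\ r -> exists c, [/\ c \in Cy y, t c = Some r & SG (Cy y) c t].
  move=> y hy; case: (hcomp (Cy y)) => [|c [hc htc hsc]]; first by exists y.
  exists c; split=> //; apply: (IH _ _ _ hsc).
  - apply: leq_trans hn; apply: leq_ltn_trans (subset_leq_card (CyS y)) _.
    by rewrite (cardsD1 r S) hr.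
  - move=> a b ha hb; have c1 := comp_conn hy ha.
    have c2 := comp_conn hy hb.
    by rewrite (erel_csym e_sym) in c1; apply: connect_trans c1 c2.
  - by move=> p; rewrite htc => -[<-]; apply/negP => /CyS' [_]; rewrite eqxx.
have P1 : forall y, y \in S -> connect (prel t) y r.
  move=> y hy; case: (eqVneq y r) => [->|nyr]; first exact: connect0.
  have hy' : y \in S :\ r by rewrite !inE nyr hy.
  case: (IHc y hy') => c [hc htc [Q1 _ _ _]].
  by apply: connect_trans (Q1 y (selfC y hy')) (connect1 _); rewrite /prel /= htc.
split => //.
- move=> y hy nyr; have hy' : y \in S :\ r by rewrite !inE nyr hy.
  case: (IHc y hy') => c [hc htc [Q1 Q2 _ _]].
  case: (eqVneq y c) => [->|nyc]; first by exists r.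
  by case: (Q2 y (selfC y hy') nyc) => p hp /CyS' [hpS _]; exists p.
- move=> w x hw hx htw; case: (eqVneq w r) => [ewr|nwr].
    by move: (hpar x); rewrite -ewr htw hx => /(_ erefl).
  have hw' : w \in S :\ r by rewrite !inE nwr hw.
  case: (IHc w hw') => c [hc htc [Q1 Q2 Q3 _]].
  case: (eqVneq w c) => [ewc|nwc].
    move: htw; rewrite ewc htc => -[<-].
    have hcS := (CyS' _ _ hc).1.
    have hnr : r \notin Cy w by apply/negP => /CyS' [_]; rewrite eqxx.
    case: (crossing (hconn r c hr hcS) hnr hc) => a [b [haS hbS eab haC hbC]].
    case: (eqVneq a r) => [ear|nar].
      by exists b; apply/andP; split; [exact: (Q1 b hbC) | rewrite -ear].
    move: haC; rewrite inE !inE nar haS /=.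
    move: hbC; rewrite inE => /andP [hb hwb].
    rewrite (connect_trans hwb (connect1 _)) //.
    by rewrite /erel /= hb !inE nar haS e_sym eab.
  case: (Q2 w (selfC w hw') nwc) => p hp hpC.
  move: htw; rewrite hp => -[<-].
  exact: Q3 (selfC w hw') hpC hp.
- move=> x y hx hy exy; case: (eqVneq x r) => [->|nxr].
    by rewrite /in_subtree /= (P1 y hy).
  case: (eqVneq y r) => [->|nyr].
    by rewrite /in_subtree /= (P1 x hx) orbT.
  have hx' : x \in S :\ r by rewrite !inE nxr hx.
  have hy' : y \in S :\ r by rewrite !inE nyr hy.
  case: (IHc x hx') => c [hc htc [_ _ _ Q4]].
  apply: Q4 => //; first exact: selfC.
  by rewrite inE hy' connect1 // /erel /= hx' hy' exy.
Qed.

Hypothesis G_conn : forall x y : V, connect e x y.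

Lemma search_tree_good t : search_tree e t -> good e t.
Proof.
case=> r [hr hs].
have := @search_good #|[set: V]|.+1 [set: V] r t (ltnSn _) hs.
case.
- move=> x y _ _; rewrite (@eq_connect _ _ e) //.
  by move=> a b; rewrite /erel /= !inE.
- by move=> p; rewrite hr.
move=> Q1 _ Q3 Q4; split.
- by exists r; split=> // y; apply: Q1; rewrite ?inE.
- by move=> w x hw; apply: Q3; rewrite ?inE.
- by move=> x y; apply: Q4; rewrite ?inE.
Qed.

End Search.

Section Rot.
Variables (V : finType) (e : rel V).
Hypotheses (e_sym : symmetric e) (e_irr : irreflexive e).
Variables (t : rtree V) (a b : V).
Hypotheses (g : good e t) (hb : t b = Some a).

Notation t' := (rotate e t a b).

Lemma rotE x : t' x = if x == a then Some b else if x == b then t a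
  else if t x == Some b then
    (if [exists y, in_subtree t x y && e a y] then Some a else Some b)
  else t x.
Proof. by rewrite ffunE. Qed.

Lemma nab : a != b. Proof. exact: good_par_ne g hb. Qed.

Lemma rot_a : t' a = Some b. Proof. by rewrite rotE eqxx. Qed.
Lemma rot_b : t' b = t a. Proof. by rewrite rotE eq_sym (negbTE nab) eqxx. Qed.
Lemma rot_ch y : y != a -> y != b -> t y = Some b ->
  t' y = Some a \/ t' y = Some b.
Proof.
move=> nya nyb hy; rewrite rotE (negbTE nya) (negbTE nyb) hy eqxx.
by case: ifP; [left|right].
Qed.
Lemma rot_oth y : y != a -> y != b -> t y != Some b -> t' y = t y.
Proof. by move=> nya nyb hy; rewrite rotE (negbTE nya) (negbTE nyb) (negbTE hy). Qed.

Lemma rot_moved w z : t w = Some b -> in_subtree t w z -> e a z -> t' w = Some a.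
Proof.
move=> hw hwz eaz.
have nwb : w != b by apply/eqP => ewb; have := good_noself g w; rewrite hw ewb eqxx.
have nwa : w != a.
  apply/eqP => ewa; rewrite ewa in hw.
  by have := good_par_notin g hw; rewrite (subt_par hb).
rewrite rotE (negbTE nwa) (negbTE nwb) hw eqxx; case: ifP => // /negbT /existsPn /(_ z).
by rewrite hwz eaz.
Qed.

Lemma DR1 x y : x != a -> x != b -> in_subtree t' x y = in_subtree t x y.
Proof.
move=> nxa nxb; apply/idP/idP.
  move: y; apply: (clP (P := fun y => in_subtree t x y)); first exact: subt_refl.
  move=> y z /= /eqP hyz Pz.
  case: (eqVneq y a) => [eya|nya].
    move: hyz; rewrite eya rot_a => -[ezb]; rewrite -ezb in Pz.
    have nzx : b != x by rewrite eq_sym.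
    by case: (parent_in Pz nzx) => p; rewrite hb => -[<-].
  case: (eqVneq y b) => [eyb|nyb].
    move: hyz; rewrite eyb rot_b => hz.
    exact: subt_trans Pz (subt_trans (subt_par hz) (subt_par hb)).
  case: (eqVneq (t y) (Some b)) => [hy|hy].
    have hyb := subt_par hy.
    case: (rot_ch nya nyb hy); rewrite hyz => -[eza]; rewrite eza in Pz.
      exact: subt_trans Pz (subt_trans (subt_par hb) hyb).
    exact: subt_trans Pz hyb.
  by move: hyz; rewrite rot_oth // => hz; apply: subt_trans Pz (subt_par hz).
move: y; apply: (clP (P := fun y => in_subtree t' x y)); first exact: subt_refl.
move=> y z /= /eqP hyz Pz.
case: (eqVneq y a) => [eya|nya].
  rewrite eya; apply: subt_trans (subt_par rot_a).
  by apply: subt_trans Pz (subt_par _); rewrite rot_b -eya.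
case: (eqVneq y b) => [eyb|nyb].
  move: hyz; rewrite eyb hb => -[eza]; rewrite -eza in Pz.
  have nax : a != x by rewrite eq_sym.
  by case: (parent_in Pz nax) => q; rewrite rot_a => -[<-].
case: (eqVneq (t y) (Some b)) => [hy|hy].
  move: hyz; rewrite hy => -[ezb]; rewrite -ezb in Pz.
  case: (rot_ch nya nyb hy) => hy'.
    exact: subt_trans (subt_trans Pz (subt_par rot_a)) (subt_par hy').
  exact: subt_trans Pz (subt_par hy').
by apply: subt_trans Pz (subt_par _); rewrite rot_oth.
Qed.

Lemma DR2 y : in_subtree t' b y = in_subtree t a y.
Proof.
apply/idP/idP.
  move: y; apply: (clP (P := fun y => in_subtree t a y)); first exact: subt_par hb.
  move=> y z /= /eqP hyz Pz.
  case: (eqVneq y a) => [->|nya]; first exact: subt_refl.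
  case: (eqVneq y b) => [eyb|nyb].
    move: hyz; rewrite eyb rot_b => hz.
    by have := good_par_notin g hz; rewrite Pz.
  case: (eqVneq (t y) (Some b)) => [hy|hy].
    exact: subt_trans (subt_par hb) (subt_par hy).
  by move: hyz; rewrite rot_oth // => hz; apply: subt_trans Pz (subt_par hz).
move: y; apply: (clP (P := fun y => in_subtree t' b y)); first exact: subt_par rot_a.
move=> y z /= /eqP hyz Pz.
case: (eqVneq y a) => [->|nya]; first exact: subt_par rot_a.
case: (eqVneq y b) => [->|nyb]; first exact: subt_refl.
case: (eqVneq (t y) (Some b)) => [hy|hy].
  case: (rot_ch nya nyb hy) => hy'.
    exact: subt_trans (subt_par rot_a) (subt_par hy').
  exact: subt_par hy'.
by apply: subt_trans Pz (subt_par _); rewrite rot_oth.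
Qed.

Lemma DA y : in_subtree t a y -> ~~ in_subtree t b y -> in_subtree t' a y.
Proof.
move=> hy nb; suff : in_subtree t b y || in_subtree t' a y by rewrite (negbTE nb).
move: y hy {nb}; apply: (clP (P := fun y => in_subtree t b y || in_subtree t' a y)).
  by rewrite subt_refl orbT.
move=> y z /= /eqP hyz /orP Pz.
case: (eqVneq y a) => [->|nya]; first by rewrite subt_refl orbT.
case: (eqVneq y b) => [->|nyb]; first by rewrite subt_refl.
case: (eqVneq (t y) (Some b)) => [hy|hy]; first by rewrite (subt_par hy).
case: Pz => Pz; first by rewrite (subt_trans Pz (subt_par hyz)).
by rewrite (subt_trans Pz (subt_par _)) ?orbT // rot_oth.
Qed.

Lemma rot_good : good e t'.
Proof.
have [[r [hr hre]] S1 S2] := g.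
split.
- case hta : (t a) => [p|].
    have nra : r != a by apply/eqP => era; move: hr; rewrite era hta.
    have nrb : r != b by apply/eqP => erb; move: hr; rewrite erb hb.
    exists r; split; first by rewrite rot_oth // hr.
    by move=> y; have := DR1 y nra nrb; rewrite /in_subtree /= => ->; apply: hre.
  exists b; split; first by rewrite rot_b.
  have era : r = a by apply: (root_only hta); apply: hre.
  by move=> y; have := DR2 y; rewrite /in_subtree /= => ->; rewrite -era; apply: hre.
- move=> w x hw.
  case: (eqVneq w a) => [ewa|nwa].
    move: hw; rewrite ewa rot_a => -[<-].
    case: (S1 _ _ hb) => z0 /andP [hbz0 eaz0].
    case: (eqVneq z0 b) => [ez0|nz0].
      by exists a; rewrite subt_refl e_sym -ez0.
    case: (child_of hbz0 nz0) => w' hw' hw'z0.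
    have hmv := rot_moved hw' hw'z0 eaz0.
    case: (S1 _ _ hw') => z1 /andP [hw'z1 ebz1].
    have nw'a : w' != a by apply/eqP => e1; move: hmv; rewrite e1 rot_a => -[]; apply/eqP; rewrite eq_sym nab.
    have nw'b : w' != b by apply/eqP => e1; have := good_noself g w'; rewrite hw' e1 eqxx.
    exists z1; rewrite ebz1 andbT.
    by apply: subt_trans (subt_par hmv) _; rewrite DR1.
  case: (eqVneq w b) => [ewb|nwb].
    move: hw; rewrite ewb rot_b => hx.
    by case: (S1 _ _ hx) => z /andP [h1 h2]; exists z; rewrite DR2 h1 h2.
  case: (eqVneq (t w) (Some b)) => [htw|htw].
    case: (eqVneq x a) => [exa|nxa].
      move: hw; rewrite rotE (negbTE nwa) (negbTE nwb) htw eqxx.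
      case: ifP => [/existsP [z hz] _|]; last by move=> _ [eba]; move: nab; rewrite eba exa eqxx.
      by exists z; rewrite DR1 // exa.
    case: (rot_ch nwa nwb htw); rewrite hw => -[ex]; first by move: nxa; rewrite ex eqxx.
    by case: (S1 _ _ htw) => z /andP [h1 h2]; exists z; rewrite DR1 // h1 ex h2.
  move: hw; rewrite rot_oth // => hx.
  by case: (S1 _ _ hx) => z /andP [h1 h2]; exists z; rewrite DR1 // h1 h2.
- have LB z : z != a -> z != b -> e b z -> in_subtree t' b z || in_subtree t' z b.
    move=> nza nzb ebz; rewrite DR2 DR1 //.
    case/orP: (S2 _ _ ebz) => [h|->]; last by rewrite orbT.
    by rewrite (subt_trans (subt_par hb) h).
  have LA z : z != a -> z != b -> e a z -> in_subtree t' a z || in_subtree t' z a.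
    move=> nza nzb eaz; rewrite (DR1 a nza nzb).
    case/orP: (S2 _ _ eaz) => [h|->]; last by rewrite orbT.
    case hbz : (in_subtree t b z); last by rewrite DA ?hbz.
    have nzb' : z != b by [].
    case: (child_of hbz nzb') => w hw hwz.
    have hmv := rot_moved hw hwz eaz.
    have nwa : w != a by apply/eqP => e1; move: hmv; rewrite e1 rot_a => -[]; apply/eqP; rewrite eq_sym nab.
    have nwb : w != b by apply/eqP => e1; have := good_noself g w; rewrite hw e1 eqxx.
    by rewrite (subt_trans (subt_par hmv) _) // DR1.
  move=> x y exy.
  case: (eqVneq x a) => [exa|nxa].
    rewrite exa in exy *.
    case: (eqVneq y b) => [->|nyb]; first by rewrite (subt_par rot_a) orbT.
    case: (eqVneq y a) => [eya|nya]; first by move: exy; rewrite eya e_irr.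
    exact: LA.
  case: (eqVneq x b) => [exb|nxb].
    rewrite exb in exy *.
    case: (eqVneq y a) => [->|nya]; first by rewrite (subt_par rot_a).
    case: (eqVneq y b) => [eyb|nyb]; first by move: exy; rewrite eyb e_irr.
    exact: LB.
  case: (eqVneq y a) => [eya|nya].
    by rewrite eya in exy *; rewrite orbC; apply: LA => //; rewrite e_sym.
  case: (eqVneq y b) => [eyb|nyb].
    by rewrite eyb in exy *; rewrite orbC; apply: LB => //; rewrite e_sym.
  by have := S2 _ _ exy; rewrite !DR1.
Qed.

Lemma rotation_of : rotation e t a b t'.
Proof. by split => //; apply: good_search => //; apply: rot_good. Qed.

End Rot.

Section Par.
Variables (V : finType) (e : rel V).
Hypotheses (e_sym : symmetric e) (e_irr : irreflexive e).
Hypothesis G_conn : forall x y : V, connect e x y.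
Implicit Types (t : rtree V).

Lemma one_of t u v : good e t -> e u v -> in_subtree t u v = ~~ in_subtree t v u.
Proof.
move=> g euv; case h1 : (in_subtree t u v); case h2 : (in_subtree t v u) => //.
  by move: euv; rewrite (good_anti g h1 h2) e_irr.
by have := good_S2 g euv; rewrite h1 h2.
Qed.

Lemma rot_flip t a b u v : good e t -> t b = Some a -> e u v ->
  in_subtree (rotate e t a b) u v =
  in_subtree t u v (+) (((a == u) && (b == v)) || ((a == v) && (b == u))).
Proof.
move=> g hb euv; have g' := rot_good e_sym e_irr g hb.
have nuv : u != v by apply/eqP => euv'; move: euv; rewrite euv' e_irr.
have nab := nab g hb.
case: (boolP ((u != a) && (u != b))) => [/andP [nua nub]|].
  rewrite (DR1 g hb) // (eq_sym a u) (negbTE nua) (eq_sym b u) (negbTE nub).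
  by rewrite andbF addbF.
move=> hu.
case: (boolP ((v != a) && (v != b))) => [/andP [nva nvb]|hv].
  rewrite (one_of g' euv) (one_of g euv) (DR1 g hb) //.
  by rewrite (eq_sym a v) (negbTE nva) (eq_sym b v) (negbTE nvb) andbF addbF.
move: hu hv; rewrite !negb_and !negbK => hu hv.
case/orP: hu => /eqP eu; case/orP: hv => /eqP ev.
- by move: nuv; rewrite eu ev eqxx.
- rewrite eu ev in euv *.
  by rewrite (one_of g' euv) (subt_par (rot_a _ _ _ _)) (subt_par hb) !eqxx.
- rewrite eu ev in euv *.
  by rewrite (one_of g euv) (subt_par (rot_a _ _ _ _)) (subt_par hb) !eqxx orbT.
- by move: nuv; rewrite eu ev eqxx.
Qed.

Lemma seq_flip s t t' u v : good e t -> rot_seq e t s t' -> e u v ->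
  in_subtree t' u v = in_subtree t u v (+) odd (n_uv u v s).
Proof.
elim: s t => [|[[a b] t1] s IH] t g /=.
  by move=> -> _; rewrite addbF.
case=> [[st st1 hb et1]] hs euv.
rewrite (IH _ (search_tree_good e_sym G_conn st1) hs euv) et1 (rot_flip g hb euv).
by rewrite /n_uv /= oddD oddb addbA.
Qed.

Lemma diff_iff t t' u v : good e t -> good e t' -> e u v ->
  (diff_order t t' u v <-> in_subtree t u v != in_subtree t' u v).
Proof.
move=> g g' euv.
have nuv : u != v by apply/eqP => euv'; move: euv; rewrite euv' e_irr.
have nvu : v != u by rewrite eq_sym.
rewrite /diff_order /anc nuv nvu /=.
have h1 := one_of g euv; have h2 := one_of g' euv.
rewrite /in_subtree /= in h1 h2 *.
rewrite h1 h2; move: (connect (prel t) u v) (connect (prel t') u v) => A B.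
by case: A; case: B; rewrite /=; split => //; firstorder.
Qed.

End Par.

Section Conn.
Variables (V : finType) (e : rel V).
Hypotheses (e_sym : symmetric e) (e_irr : irreflexive e).
Hypothesis G_conn : forall x y : V, connect e x y.
Implicit Types (t : rtree V).

Lemma rot_seq_cat t s1 s2 m t' : rot_seq e t s1 m -> rot_seq e m s2 t' ->
  rot_seq e t (s1 ++ s2) t'.
Proof.
elim: s1 t => [|[[a b] t1] s IH] t /=; first by move=> ->.
by case=> h1 h2 h3; split=> //; apply: IH h2 h3.
Qed.

Lemma rot_seq_catP t s1 s2 t' : rot_seq e t (s1 ++ s2) t' ->
  exists m, rot_seq e t s1 m /\ rot_seq e m s2 t'.
Proof.
elim: s1 t => [|[[a b] t1] s IH] t /=; first by move=> h; exists t.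
by case=> h1 /IH [m [h2 h3]]; exists m.
Qed.

Lemma good_proper2 t z y : good e t -> in_subtree t z y -> y != z ->
  Dset t y \proper Dset t z.
Proof.
move=> g hzy nyz; rewrite properE; apply/andP; split.
  by apply/subsetP => w; rewrite !inD => h; apply: subt_trans hzy h.
apply/subsetPn; exists z; first by rewrite inD subt_refl.
rewrite inD; apply/negP => hyz.
by move: nyz; rewrite (good_anti g hzy hyz) eqxx.
Qed.

Lemma Dset_root t r : good e t -> t r = None -> Dset t r = setT.
Proof.
move=> g hr; have [[r0 [hr0 hre]] _ _] := g.
have er : r0 = r by apply: (root_only hr); apply: hre.
by apply/setP => y; rewrite inD inE -er; apply: hre.
Qed.

Lemma up t c y : good e t -> in_subtree t c y ->
  exists s t', [/\ rot_seq e t s t', good e t', Dset t' y = Dset t c &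
     forall x, x \notin Dset t c -> Dset t' x = Dset t x].
Proof.
move=> g hcy; have [n] := ubnP (#|Dset t c| - #|Dset t y|).
elim: n => // n IH in t g hcy * => /ltnSE hn.
case: (eqVneq y c) => [->|nyc]; first by exists [::], t.
case: (parent_in hcy nyc) => a hya hca.
have g1 := rot_good e_sym e_irr g hya.
have rot1 := rotation_of e_sym e_irr g hya.
have D1 x : x != a -> x != y -> Dset (rotate e t a y) x = Dset t x.
  by move=> h1 h2; apply/setP => z; rewrite !inD (DR1 g hya).
have D1y : Dset (rotate e t a y) y = Dset t a.
  by apply/setP => z; rewrite !inD (DR2 g hya).
have hyD : y \in Dset t c by rewrite inD.
have haD : a \in Dset t c by rewrite inD.
case: (eqVneq a c) => [eac|nac].
  exists [:: (a, y, rotate e t a y)], (rotate e t a y); split => //.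
    by rewrite -eac.
  by move=> x hx; apply: D1; apply/eqP => ex; move: hx; rewrite ex ?hyD ?haD.
have D1c : Dset (rotate e t a y) c = Dset t c.
  by apply: D1; rewrite eq_sym.
have hcy1 : in_subtree (rotate e t a y) c y by rewrite -inD D1c.
have h1 := proper_card (good_proper g hya).
have h2 : #|Dset t a| <= #|Dset t c|.
  by apply: subset_leq_card; apply/subsetP => w; rewrite !inD => h; apply: subt_trans hca h.
have hlt : #|Dset (rotate e t a y) c| - #|Dset (rotate e t a y) y| < n.
  by rewrite D1c D1y; lia.
case: (IH _ g1 hcy1 hlt) => s [t' [hs g' hy' hx']].
exists ((a, y, rotate e t a y) :: s), t'; split => //.
  by rewrite hy' D1c.
move=> x hx; rewrite hx' ?D1c // D1 //; apply/eqP => ex; move: hx; rewrite ex ?hyD ?haD //.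
Qed.

Lemma same_par t t2 x p : good e t -> good e t2 ->
  (forall x y, in_subtree t x y = in_subtree t2 x y) -> t x = Some p -> t2 x = Some p.
Proof.
move=> g g2 hD hx.
have nxp : x != p by apply/eqP => exp; have := good_noself g x; rewrite hx exp eqxx.
have h2 : in_subtree t2 p x by rewrite -hD; apply: subt_par hx.
case: (parent_in h2 nxp) => q hq hpq.
have nxq : x != q by apply/eqP => exq; have := good_noself g2 x; rewrite hq exq eqxx.
have h3 : in_subtree t q x by rewrite hD; apply: subt_par hq.
case: (parent_in h3 nxq) => p'; rewrite hx => -[<-] hqp.
by rewrite hq (good_anti g hqp _) // hD.
Qed.

Lemma eq_tree t t2 : good e t -> good e t2 -> (forall x, Dset t x = Dset t2 x) -> t = t2.
Proof.
move=> g g2 hD.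
have hD' : forall x y, in_subtree t x y = in_subtree t2 x y.
  by move=> x y; rewrite -!inD hD.
apply/ffunP => x; case hx : (t x) => [p|].
  by rewrite (same_par g g2 hD' hx).
case hx2 : (t2 x) => [q|] //.
by move: hx; rewrite (same_par g2 g (fun x y => esym (hD' x y)) hx2).
Qed.

Lemma conn_rot t1 t2 : good e t1 -> good e t2 -> exists s, rot_seq e t1 s t2.
Proof.
move=> g1 g2.
pose P t := [set x | [forall z, in_subtree t2 z x ==> (Dset t z == Dset t2 z)]].
have [n] := ubnP #|~: P t1|; elim: n => // n IH in t1 g1 * => /ltnSE hn.
case: (boolP [forall x, Dset t1 x == Dset t2 x]) => [/forallP hall|].
  by exists [::]; apply: eq_tree => // x; apply/eqP/hall.
move/forallPn => [x0 hx0].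
have Pi0 : (Dset t1 x0 != Dset t2 x0) && in_subtree t2 x0 x0 by rewrite hx0 subt_refl.
case: (@arg_maxnP _ x0 (fun z => (Dset t1 z != Dset t2 z) && in_subtree t2 z x0) (fun z => #|Dset t2 z|) Pi0) => y /andP [hy hyx0] ymax.
have hanc : forall z, in_subtree t2 z y -> z != y -> Dset t1 z = Dset t2 z.
  move=> z hzy nzy; apply/eqP; apply/negPn/negP => hz.
  have := ymax z; rewrite hz (subt_trans hzy hyx0) => /(_ isT).
  have := proper_card (good_proper2 g2 hzy (_ : y != z)).
  by rewrite eq_sym => /(_ nzy) h1 h2; have := leq_ltn_trans h2 h1; rewrite ltnn.
have [c hc] : exists c, Dset t1 c = Dset t2 y.
  case h2y : (t2 y) => [p|].
    have npy : y != p by apply/eqP => eyp; have := good_noself g2 y; rewrite h2y eyp eqxx.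
    have hp := hanc p (subt_par h2y) (_ : p != y); rewrite eq_sym in hp.
    have hp' := hp npy.
    have hy1 : in_subtree t1 p y by rewrite -inD hp' inD; apply: subt_par h2y.
    case: (child_of hy1 npy) => c hc hcy.
    exists c; rewrite (comp_child e_sym g1 hc hcy) (comp_child e_sym g2 h2y (subt_refl _ _)).
    by rewrite hp'.
  have [[r1 [hr1 _]] _ _] := g1.
  by exists r1; rewrite (Dset_root g1 hr1) (Dset_root g2 h2y).
have hcy : in_subtree t1 c y by rewrite -inD hc inD subt_refl.
case: (up g1 hcy) => s1 [t' [hs1 g' hy' hx']].
have keep : forall x, ~~ in_subtree t2 y x -> Dset t' x = Dset t1 x.
  by move=> x hx; apply: hx'; rewrite hc inD.
have sub : P t1 \subset P t'.
  apply/subsetP => x; rewrite !inE => /forallP hx; apply/forallP => z.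
  apply/implyP => hzx; have := hx z; rewrite hzx /= => /eqP hz.
  rewrite keep ?hz //; apply/negP => hyz.
  by have := hx y; rewrite (subt_trans hyz hzx) /= (negbTE hy).
have yP' : y \in P t'.
  rewrite inE; apply/forallP => z; apply/implyP => hzy.
  case: (eqVneq z y) => [->|nzy]; first by rewrite hy' hc.
  rewrite keep ?hanc //; apply/negP => hyz.
  by move: nzy; rewrite (good_anti g2 hzy hyz) eqxx.
have yP : y \notin P t1.
  by rewrite inE; apply/forallPn; exists y; rewrite subt_refl /=.
have hlt : #|~: P t'| < n.
  apply: leq_trans hn; apply: proper_card; rewrite properE; apply/andP; split.
    by rewrite setCS.
  by apply/subsetPn; exists y; rewrite inE; [exact: yP | rewrite negbK].
case: (IH _ g' hlt) => s2 hs2.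
by exists (s1 ++ s2); apply: rot_seq_cat hs1 hs2.
Qed.

End Conn.

Section Swap.
Variable V : finType.

Definition sw (u v x : V) := if x == u then v else if x == v then u else x.

Lemma swK u v x : sw u v (sw u v x) = x.
Proof.
rewrite /sw; case: (eqVneq x u) => [->|nxu].
  by case: (eqVneq v u) => [->|nvu]; rewrite ?eqxx.
case: (eqVneq x v) => [->|nxv]; first by rewrite eqxx.
by rewrite (negbTE nxu) (negbTE nxv).
Qed.

Lemma sw_inj u v : injective (sw u v).
Proof. by move=> x y h; rewrite -(swK u v x) h swK. Qed.

Lemma sw_eq u v x y : (sw u v x == y) = (x == sw u v y).
Proof. by apply/eqP/eqP => [<-|->]; rewrite swK. Qed.

Lemma swC u v x : sw u v x = sw v u x.
Proof.
by rewrite /sw; case: (eqVneq x u) => h1; case: (eqVneq x v) => h2 //; rewrite -h2 -h1.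
Qed.

Lemma sw_a u v : sw u v u = v. Proof. by rewrite /sw eqxx. Qed.
Lemma sw_b u v : sw u v v = u.
Proof. by rewrite /sw; case: (eqVneq v u) => [->|]; rewrite ?eqxx. Qed.
Lemma sw_o u v x : x != u -> x != v -> sw u v x = x.
Proof. by move=> h1 h2; rewrite /sw (negbTE h1) (negbTE h2). Qed.

Definition swt u v (t : rtree V) : rtree V := [ffun x => omap (sw u v) (t (sw u v x))].

Lemma swtK u v t : swt u v (swt u v t) = t.
Proof.
apply/ffunP => x; rewrite !ffunE swK.
by case: (t x) => //= p; rewrite swK.
Qed.

Lemma swtC u v t : swt u v t = swt v u t.
Proof. by apply/ffunP => x; rewrite !ffunE swC; case: (t _) => //= p; rewrite swC. Qed.

Lemma omap_sw u v o p : (omap (sw u v) o == Some p) = (o == Some (sw u v p)).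
Proof.
case: o => [q|] //=; apply/eqP/eqP => [[<-]|[->]]; by rewrite swK.
Qed.

Lemma conn_map (r r' : rel V) (f : V -> V) : involutive f ->
  (forall x y, r' x y = r (f x) (f y)) -> forall x y, connect r' x y = connect r (f x) (f y).
Proof.
move=> fK hr x y; apply/idP/idP.
  move: x; apply: (clP (P := fun w => connect r (f w) (f y))); first exact: connect0.
  by move=> w z; rewrite hr => h1 h2; apply: connect_trans (connect1 h1) h2.
move=> h; suff : connect r' (f (f x)) y by rewrite fK.
move: (f x) h; apply: (clP (P := fun w => connect r' (f w) y)); first by rewrite fK connect0.
move=> w z h1 h2; apply: connect_trans h2; apply: connect1; by rewrite hr !fK.
Qed.

Lemma sub_sw u v t x y : in_subtree (swt u v t) x y = in_subtree t (sw u v x) (sw u v y).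
Proof.
rewrite /in_subtree /=; apply: conn_map; first exact: swK.
by move=> a b; rewrite /prel /= ffunE omap_sw.
Qed.

Variables (e : rel V) (u v : V).
Hypotheses (e_sym : symmetric e) (e_irr : irreflexive e) (tw : true_twins e u v).

Lemma tw_e z : z != u -> z != v -> e u z = e v z.
Proof. by move=> h1 h2; have := tw z; rewrite (negbTE h1) (negbTE h2). Qed.

Lemma e_sw x y : e (sw u v x) (sw u v y) = e x y.
Proof.
case: (eqVneq u v) => [euv|nuv].
  by rewrite /sw -euv; case: (eqVneq x u) => [->|]; case: (eqVneq y u) => [->|].
case: (eqVneq x u) => [->|nxu]; [|case: (eqVneq x v) => [->|nxv]];
  (case: (eqVneq y u) => [->|nyu]; [|case: (eqVneq y v) => [->|nyv]]);
  rewrite ?sw_a ?sw_b ?sw_o ?e_irr //.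
- by rewrite tw_e.
- by rewrite tw_e.
- by rewrite e_sym (e_sym x u) tw_e.
- by rewrite e_sym (e_sym x v) tw_e.
Qed.


Lemma good_sw t : good e t -> good e (swt u v t).
Proof.
case=> [[r [hr hre]] S1 S2]; split.
- exists (sw u v r); split; first by rewrite ffunE swK hr.
  move=> y; have := sub_sw u v t (sw u v r) y; rewrite swK /in_subtree /= => ->.
  exact: hre.
- move=> w x hw.
  have h : t (sw u v w) = Some (sw u v x).
    by apply/eqP; rewrite -omap_sw; apply/eqP; rewrite -hw ffunE.
  case: (S1 _ _ h) => z /andP [h1 h2]; exists (sw u v z).
  by rewrite sub_sw swK h1 /= -(e_sw x (sw u v z)) swK.
- by move=> x y exy; rewrite !sub_sw; apply: S2; rewrite e_sw.
Qed.

Lemma rotate_sw t a b :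
  swt u v (rotate e t a b) = rotate e (swt u v t) (sw u v a) (sw u v b).
Proof.
apply/ffunP => x; rewrite !ffunE !swK.
have E1 : (x == sw u v a) = (sw u v x == a) by rewrite sw_eq.
have E2 : (x == sw u v b) = (sw u v x == b) by rewrite sw_eq.
have E3 : (omap (sw u v) (t (sw u v x)) == Some (sw u v b)) = (t (sw u v x) == Some b).
  by rewrite omap_sw swK.
have E4 : [exists y, in_subtree (swt u v t) x y && e (sw u v a) y] =
          [exists y, in_subtree t (sw u v x) y && e a y].
  apply/existsP/existsP => -[y hy]; exists (sw u v y).
    by rewrite sub_sw in hy; rewrite -(e_sw a (sw u v y)) swK.
  by rewrite sub_sw swK e_sw.
rewrite E1 E2 E3 E4.
case: (sw u v x == a) => //=; case: (sw u v x == b) => //=.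
case: (t (sw u v x) == Some b) => //=.
by case: [exists y, _].
Qed.

Hypothesis G_conn : forall x y : V, connect e x y.

Lemma rotation_sw t a b t' : rotation e t a b t' ->
  rotation e (swt u v t) (sw u v a) (sw u v b) (swt u v t').
Proof.
case=> st st' hb et'; subst t'; split.
- exact: (good_search e_sym (good_sw (search_tree_good e_sym G_conn st))).
- exact: (good_search e_sym (good_sw (search_tree_good e_sym G_conn st'))).
- by rewrite ffunE swK hb.
- exact: rotate_sw.
Qed.

Definition swp (p : V * V * rtree V) := (sw u v p.1.1, sw u v p.1.2, swt u v p.2).

Lemma rot_seq_sw s t t' : rot_seq e t s t' ->
  rot_seq e (swt u v t) (map swp s) (swt u v t').
Proof.
elim: s t => [|[[a b] t1] s IH] t /=; first by move=> ->.
by case=> h1 h2; split; [exact: rotation_sw h1 | exact: IH].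
Qed.

Lemma twin_rot t : good e t -> t v = Some u -> u != v -> rotate e t u v = swt u v t.
Proof.
move=> g hb nuv; apply/ffunP => x; rewrite rotE ffunE.
case: (eqVneq x u) => [->|nxu]; first by rewrite sw_a hb /= sw_a.
case: (eqVneq x v) => [->|nxv].
  rewrite sw_b; case htu : (t u) => [p|] //=.
  have npu : p != u by apply/eqP => epu; have := good_noself g u; rewrite htu epu eqxx.
  have npv : p != v.
    apply/eqP => epv; rewrite epv in htu.
    by have := good_par_notin g htu; rewrite (subt_par hb).
  by rewrite sw_o.
rewrite (sw_o nxu nxv).
have hbu := subt_par hb.
case: (eqVneq (t x) (Some v)) => [htx|htx].
  rewrite htx /= sw_b.
  case: (good_S1 g htx) => z /andP [h1 h2].
  have nzv : z != v by apply/eqP => ezv; move: h2; rewrite ezv e_irr.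
  have nzu : z != u.
    apply/eqP => ezu; rewrite ezu in h1.
    have hux := subt_trans hbu (subt_par htx).
    by move: nxu; rewrite (good_anti g h1 hux) eqxx.
  case: ifP => // /negbT /existsPn /(_ z).
  by rewrite h1 tw_e // h2.
case: (eqVneq (t x) (Some u)) => [htx2|htx2].
  exfalso.
  case: (good_S1 g htx2) => z /andP [hxz euz].
  have hux := subt_par htx2.
  have nxu_s : ~~ in_subtree t x u.
    by apply/negP => h; move: nxu; rewrite (good_anti g h hux) eqxx.
  have nxv_s : ~~ in_subtree t x v.
    apply/negP => h; have nvx : v != x by rewrite eq_sym.
    by case: (parent_in h nvx) => p; rewrite hb => -[<-] hxu; move: nxu_s; rewrite hxu.
  have nzu : z != u by apply/eqP => ezu; move: nxu_s; rewrite -ezu hxz.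
  have nzv : z != v by apply/eqP => ezv; move: nxv_s; rewrite -ezv hxz.
  have evz : e v z by rewrite -tw_e.
  case/orP: (good_S2 g evz) => [hvz|hzv]; last by move: nxv_s; rewrite (subt_trans hxz hzv).
  case/orP: (anc_total hvz hxz) => [hvx|hxv]; last by move: nxv_s; rewrite hxv.
  case: (parent_in hvx nxv) => p; rewrite htx2 => -[<-] hvu.
  by move: nuv; rewrite (good_anti g hbu hvu) eqxx.
case htx3 : (t x) => [p|] //=.
have npu : p != u by apply/eqP => epu; move: htx2; rewrite htx3 epu eqxx.
have npv : p != v by apply/eqP => epv; move: htx; rewrite htx3 epv eqxx.
by rewrite sw_o.
Qed.

End Swap.

Lemma split_first (T : Type) (P : pred T) (s : seq T) : 0 < count P s ->
  exists s2 x s3, s = s2 ++ x :: s3 /\ P x.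
Proof.
elim: s => [|x s IH] //=; case hx : (P x) => /= h.
  by exists [::], x, s.
by case: (IH h) => s2 [y [s3 [-> hy]]]; exists (x :: s2), y, s3.
Qed.

Section Short.
Variables (V : finType) (e : rel V) (u v : V).
Hypotheses (e_sym : symmetric e) (e_irr : irreflexive e) (tw : true_twins e u v).
Hypothesis G_conn : forall x y : V, connect e x y.
Hypothesis nuv : u != v.

Lemma tw' : true_twins e v u.
Proof. by move=> w; rewrite tw. Qed.

Lemma flag_rot t a b : good e t -> t b = Some a ->
  ((a == u) && (b == v)) || ((a == v) && (b == u)) -> rotate e t a b = swt u v t.
Proof.
move=> g hb; case/orP => /andP [/eqP ea /eqP eb]; rewrite ea eb in hb *.
  exact: (twin_rot e_irr tw g hb nuv).
by rewrite swtC; apply: (twin_rot e_irr tw' g hb); rewrite eq_sym.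
Qed.

Lemma shorten s t t' : good e t -> rot_seq e t s t' -> 1 < n_uv u v s ->
  exists s', rot_seq e t s' t' /\ size s' < size s.
Proof.
elim: s t => [|[[a b] t1] s IH] t g //=.
case=> [[st st1 hb et1]] hs.
rewrite /n_uv /= -/(n_uv u v s).
case hf : (((a == u) && (b == v)) || ((a == v) && (b == u))) => /= hn.
  have e1 : t1 = swt u v t by rewrite et1; apply: flag_rot.
  have hn1 : 0 < count (fun p : V * V * rtree V =>
           ((p.1.1 == u) && (p.1.2 == v)) || ((p.1.1 == v) && (p.1.2 == u))) s by [].
  case: (split_first hn1) => s2 [[[a' b'] t2] [s3 [es hx]]].
  rewrite es in hs; case: (rot_seq_catP hs) => m [hs2 /= [[stm st2 hb' et2] hs3]].
  have gm := search_tree_good e_sym G_conn stm.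
  have e2 : t2 = swt u v m by rewrite et2; apply: flag_rot.
  have := rot_seq_sw e_sym e_irr tw G_conn hs2; rewrite e1 swtK -e2 => hs2'.
  exists (map (swp u v) s2 ++ s3); split; first exact: rot_seq_cat hs2' hs3.
  by rewrite es !size_cat size_map /=; lia.
case: (IH t1 (search_tree_good e_sym G_conn st1) hs hn) => s' [hs' hsz].
by exists ((a, b, t1) :: s'); split.
Qed.

End Short.

Theorem lemma4p1 (V : finType) (e : rel V)
    (e_sym : symmetric e) (e_irr : irreflexive e)
    (G_conn : forall x y : V, connect e x y) :
  (forall (u v : V) (t t' : rtree V),
      e u v -> search_tree e t -> search_tree e t' ->
      (diff_order t t' u v <->
       forall s, rot_seq e t s t' -> odd (n_uv u v s)))
  /\
  (forall (u v : V) (t t' : rtree V),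
      true_twins e u v -> search_tree e t -> search_tree e t' ->
      (diff_order t t' u v ->
         forall s, min_rot_seq e t s t' -> n_uv u v s = 1)
      /\
      (same_order t t' u v ->
         forall s, min_rot_seq e t s t' -> n_uv u v s = 0)).
Proof.
split.
  move=> u v t t' euv st st'.
  have g := search_tree_good e_sym G_conn st.
  have g' := search_tree_good e_sym G_conn st'.
  rewrite (diff_iff e_irr g g' euv); split.
    move=> hd s hs; move: hd; rewrite (seq_flip e_sym e_irr G_conn g hs euv).
    by case: (in_subtree t u v); case: (odd _).
  move=> H; case: (conn_rot e_sym e_irr g g') => s hs.
  have := H s hs; rewrite (seq_flip e_sym e_irr G_conn g hs euv) => ->.
  by case: (in_subtree t u v).
move=> u v t t' tw st st'.
case: (eqVneq u v) => [euv|nuv].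
  rewrite /diff_order /same_order /anc -euv eqxx /=.
  by split; case=> [[]|[]].
have euv : e u v.
  by have := tw v; rewrite eq_sym (negbTE nuv) eqxx /= => ->.
have g := search_tree_good e_sym G_conn st.
have g' := search_tree_good e_sym G_conn st'.
have bound : forall s, min_rot_seq e t s t' -> n_uv u v s <= 1.
  move=> s [hs hmin]; rewrite leqNgt; apply/negP => h2.
  case: (shorten e_sym e_irr tw G_conn nuv g hs h2) => s' [hs' hsz].
  by have := hmin s' hs'; rewrite leqNgt hsz.
have nvu : v != u by rewrite eq_sym.
split.
  move=> hd s hmin; have hb := bound s hmin; case: hmin => hs _.
  move: hd; rewrite (diff_iff e_irr g g' euv) (seq_flip e_sym e_irr G_conn g hs euv).
  move: hb; case: (n_uv u v s) => [|[|n]] //.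
  by case: (in_subtree t u v).
move=> hsame s hmin; have hb := bound s hmin; case: hmin => hs _.
have hI : in_subtree t u v = in_subtree t' u v.
  have h1 := one_of e_irr g euv; have h2 := one_of e_irr g' euv.
  case: hsame => -[]; rewrite /anc ?nuv ?nvu /= => ha hb'.
    by rewrite /in_subtree /= ha hb'.
  by rewrite h1 h2 /in_subtree /= ha hb'.
move: hI; rewrite (seq_flip e_sym e_irr G_conn g hs euv).
move: hb; case: (n_uv u v s) => [|[|n]] //.
by case: (in_subtree t u v).
Qed.
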